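(* For all $n \ge 3$, $\gamma(n) \le 4n - 10$.
   Context: A red-blue colouring of the edges of a complete tripartite graph is good if no two monochromatic triangles share an edge. $\gamma(n)$ is the maximum number of monochromatic triangles in a good red-blue colouring of a complete tripartite graph on $n$ vertices. *)

(* Defs.v *)
From mathcomp Require Import all_boot.
Set Implicit Arguments. Unset Strict Implicit. Unset Printing Implicit Defensive.

(* A complete tripartite graph on the vertex set 'I_n is given by a map
   p : 'I_n -> 'I_3 assigning each vertex to one of three (nonempty) parts;
   x, y are adjacent iff p x != p y.  A red-blue edge colouring is encoded by
   c : {ffun 'I_n * 'I_n -> bool}; the colour of the edge {x,y} is read off
   the ordered pair (min, max), so every c defines a colouring and every
   colouring arises this way. *)

Definition tri_adj n (p : {ffun 'I_n -> 'I_3}) (x y : 'I_n) : bool :=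
  p x != p y.

Definition edge_col n (c : {ffun 'I_n * 'I_n -> bool}) (x y : 'I_n) : bool :=
  if (x < y)%N then c (x, y) else c (y, x).

Definition parts_nonempty n (p : {ffun 'I_n -> 'I_3}) : bool :=
  [forall k : 'I_3, exists x : 'I_n, p x == k].

Definition mono_tri n (p : {ffun 'I_n -> 'I_3}) (c : {ffun 'I_n * 'I_n -> bool})
  (T : {set 'I_n}) : bool :=
  (#|T| == 3) &&
  [exists b : bool, forall x in T, forall y in T,
     (x != y) ==> (tri_adj p x y && (edge_col c x y == b))].

(* Good colouring: no two (distinct) monochromatic triangles share an edge,
   i.e. share two vertices. *)
Definition good_col n (p : {ffun 'I_n -> 'I_3}) (c : {ffun 'I_n * 'I_n -> bool}) : bool :=
  [forall T1 : {set 'I_n}, forall T2 : {set 'I_n},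
     [&& mono_tri p c T1, mono_tri p c T2 & T1 != T2] ==> (#|T1 :&: T2| <= 1)].

Definition num_mono n (p : {ffun 'I_n -> 'I_3}) (c : {ffun 'I_n * 'I_n -> bool}) : nat :=
  #|[set T : {set 'I_n} | mono_tri p c T]|.

Definition gamma (n : nat) : nat :=
  \max_(pc : {ffun 'I_n -> 'I_3} * {ffun 'I_n * 'I_n -> bool}
         | parts_nonempty pc.1 && good_col pc.1 pc.2) num_mono pc.1 pc.2.

(* Main.v *)
Require Import Defs.
From mathcomp Require Import all_boot.
From mathcomp Require Import zify.
Set Implicit Arguments. Unset Strict Implicit. Unset Printing Implicit Defensive.

Lemma third3 (a b d k : 'I_3) : a != b -> a != d -> b != d -> k != a -> k != b -> k = d.
Proof.
move: a b d k => [[|[|[|a]]] Ha] [[|[|[|b]]] Hb] [[|[|[|d]]] Hd] [[|[|[|k]]] Hk] //=;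
  by move=> *; apply/val_inj.
Qed.

Section Pf.
Variables (n : nat) (p : {ffun 'I_n -> 'I_3}) (c : {ffun 'I_n * 'I_n -> bool}).
Local Notation col := (edge_col c).

Lemma colC x y : col x y = col y x.
Proof.
rewrite /edge_col; case: ltngtP => // /val_inj -> //.
Qed.

Definition tri b x y z := [&& p x != p y, p x != p z, p y != p z,
  col x y == b, col x z == b & col y z == b].

Lemma triC12 b x y z : tri b x y z = tri b y x z.
Proof.
rewrite /tri (eq_sym (p y) (p x)) (colC y x).
by case: (p x != p z); case: (p y != p z); case: (p x != p y); case: (col x y == b); case: (col x z == b); case: (col y z == b).
Qed.

Lemma triC23 b x y z : tri b x y z = tri b x z y.
Proof.
rewrite /tri (eq_sym (p z) (p y)) (colC z y).
by case: (p x != p z); case: (p y != p z); case: (p x != p y); case: (col x y == b); case: (col x z == b); case: (col y z == b).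
Qed.

Definition monoB b (T : {set 'I_n}) := (#|T| == 3) &&
  [forall x in T, forall y in T, (x != y) ==> (p x != p y) && (col x y == b)].

Lemma mono_triP T : mono_tri p c T = [exists b, monoB b T].
Proof.
rewrite /mono_tri /monoB /tri_adj; apply/idP/existsP.
  by case/andP=> -> /existsP [b Hb]; exists b.
by case=> b /andP [-> Hb]; apply/existsP; exists b.
Qed.

Lemma neq_of_p x y : p x != p y -> x != y.
Proof. by apply: contraNneq => ->. Qed.

Lemma card_set3 (x y z : 'I_n) : x != y -> x != z -> y != z -> #|[set x; y; z]| = 3.
Proof.
move=> Hxy Hxz Hyz; by rewrite -setUA cardsU1 cards2 Hyz !inE negb_or Hxy Hxz.
Qed.

Lemma tri_monoB b x y z : tri b x y z -> monoB b [set x; y; z].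
Proof.
case/and3P=> pxy pxz /and4P [pyz cxy cxz cyz].
rewrite /monoB card_set3 ?neq_of_p //=.
apply/forallP=> a; apply/implyP; rewrite !inE => Ha.
apply/forallP=> d; apply/implyP; rewrite !inE => Hd; apply/implyP => Had.
move: Had; case/orP: Ha => [/orP [] | ] /eqP ->; case/orP: Hd => [/orP [] | ] /eqP ->;
  rewrite ?eqxx //= => _;
  rewrite ?(colC y x) ?(colC z x) ?(colC z y) ?(eq_sym (p y) (p x)) ?(eq_sym (p z) (p x)) ?(eq_sym (p z) (p y)) ?pxy ?pxz ?pyz //.
Qed.


Lemma monoB_tri b T v : monoB b T -> v \in T ->
  exists x y, T = [set v; x; y] /\ tri b v x y.
Proof.
case/andP=> /eqP cT HT Hv.
have E a d : a \in T -> d \in T -> a != d -> (p a != p d) && (col a d == b).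
  move=> Ha Hd Had; move/forallP: HT => /(_ a); rewrite Ha /= => /forallP /(_ d).
  by rewrite Hd Had.
have : #|T :\ v| == 2.
  by move: cT; rewrite (cardsD1 v) Hv add1n => -[->].
case/cards2P=> x [y [Hxy HTv]].
have Hx : x \in T :\ v by rewrite HTv !inE eqxx.
have Hy : y \in T :\ v by rewrite HTv !inE eqxx orbT.
move: Hx Hy; rewrite !inE => /andP [Hxv HxT] /andP [Hyv HyT].
exists x, y; split; first by rewrite -(setD1K Hv) HTv setUA.
have Hvx : v != x by rewrite eq_sym.
have Hvy : v != y by rewrite eq_sym.
case/andP: (E v x Hv HxT Hvx) => p1 c1.
case/andP: (E v y Hv HyT Hvy) => p2 c2.
case/andP: (E x y HxT HyT Hxy) => p3 c3.
by rewrite /tri p1 p2 p3 c1 c2 c3.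
Qed.

Lemma set3C12 (x y z : 'I_n) : [set x; y; z] = [set y; x; z].
Proof. by apply/setP=> a; rewrite !inE (orbC (a == x)). Qed.

Lemma set3C23 (x y z : 'I_n) : [set x; y; z] = [set x; z; y].
Proof. by apply/setP=> a; rewrite !inE -!orbA (orbC (a == y)). Qed.

Lemma monoB_tri_part b T v k : monoB b T -> v \in T -> k != p v ->
  exists x y, [/\ T = [set v; x; y], tri b v x y & p x = k].
Proof.
move=> HT Hv Hk; case: (monoB_tri HT Hv) => x [y [-> H]].
case: (p x =P k) => [Hx|Hx]; first by exists x, y.
exists y, x; split; [by rewrite set3C23 | by rewrite -triC23 |].
move: H => /and3P [p1 p2 /andP [p3 _]].
apply/esym/(third3 p1 p2 p3); first by [].
by apply/eqP=> E; apply: Hx; rewrite E.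
Qed.

Lemma mono_of b T : monoB b T -> mono_tri p c T.
Proof. by rewrite mono_triP => H; apply/existsP; exists b. Qed.

Hypothesis good : good_col p c.

Lemma U b x y z z' : tri b x y z -> tri b x y z' -> z = z'.
Proof.
move=> H1 H2.
have M1 := mono_of (tri_monoB H1); have M2 := mono_of (tri_monoB H2).
move/forallP/(_ [set x; y; z])/forallP/(_ [set x; y; z'])/implyP: good => G.
move: (H1) => /and3P [pxy pxz /andP [pyz _]].
case: ([set x; y; z] =P [set x; y; z']) => [E|NE].
  have : z \in [set x; y; z'] by rewrite -E !inE eqxx !orbT.
  rewrite !inE => /orP [/orP [] | ] /eqP // E'.
    by move: pxz; rewrite E' eqxx.
  by move: pyz; rewrite E' eqxx.
have Hle : #|[set x; y; z] :&: [set x; y; z']| <= 1.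
  by apply: G; rewrite M1 M2 /=; apply/eqP.
have : [set x; y] \subset [set x; y; z] :&: [set x; y; z'].
  by apply/subsetP=> a; rewrite !inE => /orP [] /eqP ->; rewrite eqxx ?orbT.
move/subset_leq_card; rewrite cards2 (neq_of_p pxy) => H.
by move: (leq_trans H Hle).
Qed.


Lemma nb (a bb : bool) : (a = bb -> False) -> a = ~~ bb.
Proof. by case: a; case: bb => // H; exfalso; apply: H. Qed.

Lemma bc (a bb : bool) : a = bb \/ a = ~~ bb.
Proof. by case: a; case: bb; auto. Qed.

Lemma tri_ax b a x y : tri b a x y -> col a x = b.
Proof. by case/and3P=> _ _ /and4P [_ /eqP -> _ _]. Qed.
Lemma tri_ay b a x y : tri b a x y -> col a y = b.
Proof. by case/and3P=> _ _ /and4P [_ _ /eqP -> _]. Qed.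
Lemma tri_xy b a x y : tri b a x y -> col x y = b.
Proof. by case/and3P=> _ _ /and4P [_ _ _ /eqP ->]. Qed.

Lemma U2 b x y z z' : tri b z x y -> tri b z' x y -> z = z'.
Proof. by rewrite triC12 triC23 => H1; rewrite triC12 triC23; apply: U. Qed.

Lemma U3 b x y z z' : tri b x z y -> tri b x z' y -> z = z'.
Proof. by rewrite triC23 => H1; rewrite triC23; apply: U. Qed.

Lemma dist2 b v xa ya xb yb : tri b v xa ya -> tri b v xb yb -> xa != xb -> ya != yb.
Proof.
move=> H1 H2; apply: contra_neq => E; move: H1; rewrite E => H1.
exact: (U3 H1 H2).
Qed.

Lemma L3 b v w x1 x2 x3 y1 y2 y3 z :
  tri b v x1 y1 -> tri b v x2 y2 -> tri b v x3 y3 ->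
  p x2 = p x1 -> p x3 = p x1 -> p y2 = p y1 -> p y3 = p y1 ->
  x1 != x2 -> x1 != x3 -> x2 != x3 ->
  p w = p v -> w != v -> tri b w x1 z ->
  (col w x1 = b /\ col w x2 = b /\ col w x3 = b) /\
  (col w y1 = ~~ b /\ col w y2 = ~~ b /\ col w y3 = ~~ b).
Proof.
move=> T1 T2 T3 px2 px3 py2 py3 d12 d13 d23 pw wv Tw.
move: (T1) => /and3P [P01 P02 /andP [P12 _]].
have mk bb a x y : p a = p v -> p x = p x1 -> p y = p y1 ->
    col a x = bb -> col a y = bb -> col x y = bb -> tri bb a x y.
  by move=> pa px py c1 c2 c3; rewrite /tri pa px py P01 P02 P12 c1 c2 c3 eqxx.
have e12 := dist2 T1 T2 d12; have e13 := dist2 T1 T3 d13; have e23 := dist2 T2 T3 d23.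
have cr xa ya xb yb : tri b v xa ya -> tri b v xb yb -> p xa = p x1 ->
    p yb = p y1 -> xa != xb -> col xa yb = ~~ b.
  move=> Ha Hb pxa pyb dab; apply: nb => E.
  have T := mk b v xa yb erefl pxa pyb (tri_ax Ha) (tri_ay Hb) E.
  have Eab := U T Ha.
  by move: (dist2 Ha Hb dab); rewrite Eab eqxx.
have nbo x y : tri b v x y -> p x = p x1 -> p y = p y1 ->
    col w x = b -> col w y = ~~ b.
  move=> Hv px py cx; apply: nb => cy.
  have T := mk b w x y pw px py cx cy (tri_xy Hv).
  by move: wv; rewrite (U2 T Hv) eqxx.
have d31 : x3 != x1 by rewrite eq_sym.
have d32 : x3 != x2 by rewrite eq_sym.
have d21 : x2 != x1 by rewrite eq_sym.
have cw1 := tri_ax Tw.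
have cy1 := nbo _ _ T1 erefl erefl cw1.
have blue x y : p x = p x1 -> p y = p y1 -> col w x = ~~ b -> col w y = ~~ b ->
    col x y = ~~ b -> tri (~~ b) w x y.
  by move=> px py c1 c2 c3; apply: mk.
case: (bc (col w x2) b) => cw2.
- have cy2 := nbo _ _ T2 px2 py2 cw2.
  case: (bc (col w x3) b) => cw3.
    by have cy3 := nbo _ _ T3 px3 py3 cw3.
  have B1 := blue _ _ px3 erefl cw3 cy1 (cr _ _ _ _ T3 T1 px3 erefl d31).
  have B2 := blue _ _ px3 py2 cw3 cy2 (cr _ _ _ _ T3 T2 px3 py2 d32).
  by move: e12; rewrite (U B1 B2) eqxx.
- have B1 := blue _ _ px2 erefl cw2 cy1 (cr _ _ _ _ T2 T1 px2 erefl d21).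
  case: (bc (col w x3) b) => cw3.
    have cy3 := nbo _ _ T3 px3 py3 cw3.
    have B3 := blue _ _ px2 py3 cw2 cy3 (cr _ _ _ _ T2 T3 px2 py3 d23).
    by move: e13; rewrite (U B1 B3) eqxx.
  have B3 := blue _ _ px3 erefl cw3 cy1 (cr _ _ _ _ T3 T1 px3 erefl d31).
  by move: d23; rewrite (U3 B1 B3) eqxx.
Qed.


Lemma mkT b0 v x1 y1 bb a x y : tri b0 v x1 y1 ->
  p a = p v -> p x = p x1 -> p y = p y1 ->
  col a x = bb -> col a y = bb -> col x y = bb -> tri bb a x y.
Proof.
move=> /and3P [P01 P02 /andP [P12 _]] pa px py c1 c2 c3.
by rewrite /tri pa px py P01 P02 P12 c1 c2 c3 eqxx.
Qed.

Lemma two3 (a1 a2 a3 : bool) : [|| a1 == a2, a1 == a3 | a2 == a3].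
Proof. by case: a1; case: a2; case: a3. Qed.

Lemma Key b v x1 x2 x3 y1 y2 y3 w xw2 xw3 z1 z2 z3 u x' :
  tri b v x1 y1 -> tri b v x2 y2 -> tri b v x3 y3 ->
  p x2 = p x1 -> p x3 = p x1 -> p y2 = p y1 -> p y3 = p y1 ->
  x1 != x2 -> x1 != x3 -> x2 != x3 ->
  tri b w x1 z1 -> tri b w xw2 z2 -> tri b w xw3 z3 ->
  p w = p v -> w != v ->
  p xw2 = p x1 -> p xw3 = p x1 -> p z1 = p y1 -> p z2 = p y1 -> p z3 = p y1 ->
  x1 != xw2 -> x1 != xw3 -> xw2 != xw3 ->
  tri b u x' y1 -> p u = p v -> u != v -> p x' = p x1 -> False.
Proof.
move=> T1 T2 T3 px2 px3 py2 py3 d12 d13 d23 Tw1 Tw2 Tw3 pw wv pxw2 pxw3 pz1 pz2 pz3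
  dw12 dw13 dw23 Tu pu uv px'.
have mk := mkT T1.
have e12 := dist2 T1 T2 d12; have e13 := dist2 T1 T3 d13; have e23 := dist2 T2 T3 d23.
have [[w1 [w2 w3]] [wy1 [wy2 wy3]]] := L3 T1 T2 T3 px2 px3 py2 py3 d12 d13 d23 pw wv Tw1.
have T1' : tri b v y1 x1 by rewrite -triC23.
have T2' : tri b v y2 x2 by rewrite -triC23.
have T3' : tri b v y3 x3 by rewrite -triC23.
have Tu' : tri b u y1 x' by rewrite -triC23.
have [[uy1 [uy2 uy3]] [u1 [u2 u3]]] := L3 T1' T2' T3' py2 py3 px2 px3 e12 e13 e23 pu uv Tu'.
have uw : u != w.
  by apply/eqP=> E; move: u1; rewrite E w1; case: (b).
have cux' := tri_ax Tu.
have cwx' : col w x' = b.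
  case: (bc (col w x') b) => // C; exfalso.
  have H2 y y0 : p y = p y1 -> p y0 = p y1 -> col u y = b -> col u y0 = b ->
      col w y = ~~ b -> col w y0 = ~~ b -> col x' y = col x' y0 -> y = y0.
    move=> py py0 c1 c2 c3 c4 E.
    case: (bc (col x' y) b) => E1.
      have A1 := mk _ _ _ _ pu px' py cux' c1 E1.
      have A2 := mk _ _ _ _ pu px' py0 cux' c2 (etrans (esym E) E1).
      exact: U A1 A2.
    have A1 := mk _ _ _ _ pw px' py C c3 E1.
    have A2 := mk _ _ _ _ pw px' py0 C c4 (etrans (esym E) E1).
    exact: U A1 A2.
  case/or3P: (two3 (col x' y1) (col x' y2) (col x' y3)) => /eqP E.
  - by move: e12; rewrite (H2 _ _ erefl py2 uy1 uy2 wy1 wy2 E) eqxx.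
  - by move: e13; rewrite (H2 _ _ erefl py3 uy1 uy3 wy1 wy3 E) eqxx.
  - by move: e23; rewrite (H2 _ _ py2 py3 uy2 uy3 wy2 wy3 E) eqxx.
have pv : p v = p w by [].
have vw : v != w by rewrite eq_sym.
have pz21 : p z2 = p z1 by rewrite pz2 pz1.
have pz31 : p z3 = p z1 by rewrite pz3 pz1.
have [_ [vz1 [vz2 _]]] := L3 Tw1 Tw2 Tw3 pxw2 pxw3 pz21 pz31 dw12 dw13 dw23 (esym pw) vw T1.
have H4 zz : p zz = p y1 -> col w zz = b -> col u zz = b.
  move=> pzz cwz; case: (bc (col u zz) b) => // C; exfalso.
  have H x x0 : p x = p x1 -> p x0 = p x1 -> col w x = b -> col w x0 = b ->
      col u x = ~~ b -> col u x0 = ~~ b -> col x zz = col x0 zz -> x = x0.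
    move=> px py0 c1 c2 c3 c4 E.
    case: (bc (col x zz) b) => E1.
      have A1 := mk _ _ _ _ pw px pzz c1 cwz E1.
      have A2 := mk _ _ _ _ pw py0 pzz c2 cwz (etrans (esym E) E1).
      exact: U3 A1 A2.
    have A1 := mk _ _ _ _ pu px pzz c3 C E1.
    have A2 := mk _ _ _ _ pu py0 pzz c4 C (etrans (esym E) E1).
    exact: U3 A1 A2.
  case/or3P: (two3 (col x1 zz) (col x2 zz) (col x3 zz)) => /eqP E.
  - by move: d12; rewrite (H _ _ erefl px2 w1 w2 u1 u2 E) eqxx.
  - by move: d13; rewrite (H _ _ erefl px3 w1 w3 u1 u3 E) eqxx.
  - by move: d23; rewrite (H _ _ px2 px3 w2 w3 u2 u3 E) eqxx.
have uz1 := H4 _ pz1 (tri_ay Tw1).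
have uz2 := H4 _ pz2 (tri_ay Tw2).
have H5 zz : p zz = p y1 -> col w zz = b -> col u zz = b -> col x' zz = ~~ b.
  move=> pzz c1 c2; apply: nb => E.
  have A1 := mk _ _ _ _ pw px' pzz cwx' c1 E.
  have A2 := mk _ _ _ _ pu px' pzz cux' c2 E.
  by move: uw; rewrite (U2 A1 A2) eqxx.
have x'z1 := H5 _ pz1 (tri_ay Tw1) uz1.
have x'z2 := H5 _ pz2 (tri_ay Tw2) uz2.
have cvx' : col v x' = ~~ b.
  apply: nb => E.
  have A1 := mk _ _ _ _ erefl px' erefl E (tri_ay T1) (tri_xy Tu).
  by move: uv; rewrite (U2 A1 Tu) eqxx.
have B1 := mk _ _ _ _ erefl px' pz1 cvx' vz1 x'z1.
have B2 := mk _ _ _ _ erefl px' pz2 cvx' vz2 x'z2.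
have E := U B1 B2.
move: Tw1; rewrite E => Tw1.
by move: dw12; rewrite (U3 Tw1 Tw2) eqxx.
Qed.


Definition Rs b (S : {set 'I_n}) := [set T : {set 'I_n} | (T \subset S) && monoB b T].
Definition Dg b S (z : 'I_n) := [set T in Rs b S | z \in T].

Lemma Rs_mem b (S : {set 'I_n}) (a x y : 'I_n) : [set a; x; y] \in Rs b S -> [/\ a \in S, x \in S & y \in S].
Proof.
rewrite inE => /andP [/subsetP H _].
by split; apply: H; rewrite !inE eqxx ?orbT.
Qed.

Lemma another b (S : {set 'I_n}) (a : 'I_n) (L : {set {set 'I_n}}) (k : 'I_3) :
  (forall z, z \in S -> 3 <= #|Dg b S z|) -> a \in S -> #|L| <= 2 -> k != p a ->
  exists x y, [/\ tri b a x y, p x = k, [set a; x; y] \in Rs b S & [set a; x; y] \notin L].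
Proof.
move=> H3 Ha HL Hk.
have : Dg b S a :\: L != set0.
  rewrite -card_gt0 cardsD.
  have h1 := H3 a Ha.
  have h2 : #|Dg b S a :&: L| <= #|L| by apply: subset_leq_card; apply: subsetIr.
  lia.
case/set0Pn=> T; rewrite !inE => /andP [HTL /andP [/andP [HTS HM] HaT]].
case: (monoB_tri_part HM HaT Hk) => x [y [ET Ht Hp]].
by exists x, y; split => //; rewrite -ET // inE HTS HM.
Qed.

Lemma neq_of_set b v x y x' y' : tri b v x y -> tri b v x' y' ->
  [set v; x; y] != [set v; x'; y'] -> x != x'.
Proof.
move=> H1 H2; apply: contra_neq => E; move: H1; rewrite E => H1.
by rewrite (U H1 H2).
Qed.

Lemma partD b0 v x1 y1 q : tri b0 v x1 y1 -> q != p v -> q != p x1 -> q = p y1.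
Proof.
case/and3P=> P01 P02 /andP [P12 _]; exact: third3.
Qed.

Lemma keyexist b (S : {set 'I_n}) : S != set0 -> exists2 z, z \in S & #|Dg b S z| <= 2.
Proof.
move=> HS.
case: (boolP [exists z in S, #|Dg b S z| <= 2]) => [/existsP [z /andP [Hz Hd]] | H].
  by exists z.
exfalso.
have H3 z : z \in S -> 3 <= #|Dg b S z|.
  move=> Hz; rewrite leqNgt; apply/negP => Hlt; move/negP: H; apply.
  by apply/existsP; exists z; rewrite Hz.
case/set0Pn: HS => s Hs.
have : [set~ p s] != set0 by rewrite -card_gt0 cardsC1 card_ord.
case/set0Pn=> k; rewrite !inE => Hk.
have L0 : #|(set0 : {set {set 'I_n}})| <= 2 by rewrite cards0.
case: (another H3 Hs L0 Hk) => x1 [y1 [T1 _ R1 _]].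
set v := s in T1 R1.
have [Sv Sx1 Sy1] := Rs_mem R1.
move: (T1) => /and3P [P01 P02 /andP [P12 _]].
have P10 : p x1 != p v by rewrite eq_sym.
have P20 : p y1 != p v by rewrite eq_sym.
have P21 : p y1 != p x1 by rewrite eq_sym.
have L1 (T : {set 'I_n}) : #|[set T]| <= 2 by rewrite cards1.
have L2 (T T' : {set 'I_n}) : #|[set T; T']| <= 2 by rewrite cards2; case: (T != T').
case: (another H3 Sv (L1 [set v; x1; y1]) P10) => x2 [y2 [T2 px2 R2 N2]].
case: (another H3 Sv (L2 [set v; x1; y1] [set v; x2; y2]) P10) => x3 [y3 [T3 px3 R3 N3]].
move: N2 N3; rewrite !inE negb_or => N2 /andP [N31 N32].
have d12 : x1 != x2 by apply: (neq_of_set T1 T2); rewrite eq_sym.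
have d13 : x1 != x3 by apply: (neq_of_set T1 T3); rewrite eq_sym.
have d23 : x2 != x3 by apply: (neq_of_set T2 T3); rewrite eq_sym.
have py2 : p y2 = p y1.
  move: (T2) => /and3P [_ Q1 /andP [Q2 _]].
  apply: (partD T1); first by rewrite eq_sym.
  by rewrite -px2 eq_sym.
have py3 : p y3 = p y1.
  move: (T3) => /and3P [_ Q1 /andP [Q2 _]].
  apply: (partD T1); first by rewrite eq_sym.
  by rewrite -px3 eq_sym.
case: (another H3 Sx1 (L1 [set v; x1; y1]) P01) => w [z1 [Tw1' pw Rw1 Nw1]].
have Tw1 : tri b w x1 z1 by rewrite -triC12.
have [_ Sw Sz1] := Rs_mem Rw1.
move: Nw1; rewrite !inE => Nw1.
have wv : w != v.
  apply/eqP=> E; move: Nw1; rewrite E in Tw1 *.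
  by rewrite (U Tw1 T1) set3C12 eqxx.
have pz1 : p z1 = p y1.
  move: (Tw1) => /and3P [_ Q1 /andP [Q2 _]].
  apply: (partD T1); first by rewrite -pw eq_sym.
  by rewrite eq_sym.
have pwx : p x1 != p w by rewrite pw.
case: (another H3 Sw (L1 [set w; x1; z1]) pwx) => xw2 [z2 [Tw2 pxw2 Rw2 Nw2]].
case: (another H3 Sw (L2 [set w; x1; z1] [set w; xw2; z2]) pwx) => xw3 [z3 [Tw3 pxw3 Rw3 Nw3]].
move: Nw2 Nw3; rewrite !inE negb_or => Nw2 /andP [Nw31 Nw32].
have dw12 : x1 != xw2 by apply: (neq_of_set Tw1 Tw2); rewrite eq_sym.
have dw13 : x1 != xw3 by apply: (neq_of_set Tw1 Tw3); rewrite eq_sym.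
have dw23 : xw2 != xw3 by apply: (neq_of_set Tw2 Tw3); rewrite eq_sym.
have pz2 : p z2 = p y1.
  move: (Tw2) => /and3P [_ Q1 /andP [Q2 _]].
  apply: (partD T1); first by rewrite -pw eq_sym.
  by rewrite -pxw2 eq_sym.
have pz3 : p z3 = p y1.
  move: (Tw3) => /and3P [_ Q1 /andP [Q2 _]].
  apply: (partD T1); first by rewrite -pw eq_sym.
  by rewrite -pxw3 eq_sym.
have P02' : p v != p y1 by [].
case: (another H3 Sy1 (L1 [set v; x1; y1]) P02') => u [x' [Tu' pu Ru Nu]].
have Tu : tri b u x' y1 by rewrite triC23 -triC12.
move: Nu; rewrite !inE => Nu.
have uv : u != v.
  apply/eqP=> E; move: Nu; rewrite E in Tu *.
  by rewrite (U3 Tu T1) set3C12 set3C23 eqxx.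
have px' : p x' = p x1.
  move: (Tu) => /and3P [Q0 Q1 /andP [Q2 _]].
  apply: (third3 P02 P01 P21); first by rewrite -pu eq_sym.
  by [].
exact: (Key T1 T2 T3 px2 px3 py2 py3 d12 d13 d23 Tw1 Tw2 Tw3 pw wv pxw2 pxw3
  pz1 pz2 pz3 dw12 dw13 dw23 Tu pu uv px').
Qed.


Lemma countRs b k : forall S : {set 'I_n}, #|S| = k.+3 -> #|Rs b S| + 5 <= 2 * #|S|.
Proof.
elim: k => [|k IH] S HS.
  have : Rs b S \subset [set S].
    apply/subsetP=> T; rewrite /Rs !inE /monoB => /andP [HTS /andP [/eqP cT _]].
    by rewrite eqEcard HTS cT HS.
  move/subset_leq_card; rewrite cards1 HS => h; lia.
have HS0 : S != set0 by rewrite -card_gt0 HS.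
case: (keyexist b HS0) => z Hz Hd.
have Hsub : Rs b S \subset Rs b (S :\ z) :|: Dg b S z.
  apply/subsetP=> T HT; rewrite in_setU.
  case: (boolP (z \in T)) => HzT.
    by apply/orP; right; rewrite /Dg inE HT HzT.
  apply/orP; left; move: HT; rewrite /Rs !inE => /andP [HTS HM].
  rewrite HM andbT.
  apply/subsetP=> a Ha; rewrite !inE (subsetP HTS a Ha) andbT.
  by apply: contraNneq HzT => <-.
have cS : #|S :\ z| = k.+3.
  by move: HS; rewrite (cardsD1 z) Hz add1n => -[].
have h1 := IH _ cS.
have h2 := subset_leq_card Hsub.
have h3 : #|Rs b (S :\ z) :|: Dg b S z| <= #|Rs b (S :\ z)| + #|Dg b S z|.
  by rewrite cardsU leq_subr.
rewrite HS; rewrite cS in h1; lia.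
Qed.

End Pf.

Theorem lemma6p1 (n : nat) : 3 <= n -> gamma n <= 4 * n - 10.
Proof.
move=> Hn; rewrite /gamma; apply/bigmax_leqP => [[p c]] /andP [_ good] /=.
move: good => /= good.
have cT : #|[set: 'I_n]| = (n - 3).+3 by rewrite cardsT card_ord; lia.
have h1 := countRs good true cT.
have h2 := countRs good false cT.
have Hsub : [set T | mono_tri p c T] \subset
    Rs p c true [set: 'I_n] :|: Rs p c false [set: 'I_n].
  apply/subsetP=> T; rewrite inE mono_triP => /existsP [b Hb].
  by case: b Hb => Hb; rewrite !inE subsetT Hb ?orbT.
have h3 := subset_leq_card Hsub.
have h4 : #|Rs p c true [set: 'I_n] :|: Rs p c false [set: 'I_n]| <=
    #|Rs p c true [set: 'I_n]| + #|Rs p c false [set: 'I_n]|.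
  by rewrite cardsU leq_subr.
rewrite /num_mono; rewrite cT in h1 h2; apply: (leq_trans h3); apply: (leq_trans h4); lia.
Qed.
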